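(* Consider the stochastic bipartite matching model described in the context, under the stability condition, with stationary distribution $\pi$. Then \[ \sum_{(i,k)\in\mathcal{I}\times\mathcal{K}} \lambda_i\mu_k \sum_{\substack{\mathcal{A}\in\mathcal{J}:\ i\in\mathcal{I}(\mathcal{A}\cap\mathcal{K}),\\ k\in\mathcal{K}(\mathcal{A}\cap\mathcal{I})}} \pi(\mathcal{A}) \;=\; \sum_{\substack{(i,k)\in\mathcal{I}\times\mathcal{K}:\\ i\nsim k}} \lambda_i\mu_k \sum_{\substack{\mathcal{A}\in\mathcal{J}_0:\ i\notin\mathcal{I}(\mathcal{A}\cap\mathcal{K}),\\ k\notin\mathcal{K}(\mathcal{A}\cap\mathcal{I})}} \pi(\mathcal{A}). \]
   Context: Let $\mathcal{I}$ (customer classes) and $\mathcal{K}$ (server classes) be disjoint finite non-empty sets, and consider a connected bipartite graph (the compatibility graph) on $\mathcal{I}\cup\mathcal{K}$ whose edges all join an element of $\mathcal{I}$ to an element of $\mathcal{K}$; write $i\sim k$ if $i\in\mathcal{I}$ and $k\in\mathcal{K}$ are adjacent and $i\nsim k$ otherwise. For $i\in\mathcal{I}$ let $\mathcal{K}_i=\{k\in\mathcal{K}: i\sim k\}$ and for $k\in\mathcal{K}$ let $\mathcal{I}_k=\{i\in\mathcal{I}: i\sim k\}$. Let $\lambda_i>0$ ($i\in\mathcal{I}$) and $\mu_k>0$ ($k\in\mathcal{K}$) with $\sum_i\lambda_i=\sum_k\mu_k=1$. For $\mathcal{A}\subseteq\mathcal{I}$ write $\lambda(\mathcal{A})=\sum_{i\in\mathcal{A}}\lambda_i$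 and $\mathcal{K}(\mathcal{A})=\bigcup_{i\in\mathcal{A}}\mathcal{K}_i$; for $\mathcal{A}\subseteq\mathcal{K}$ write $\mu(\mathcal{A})=\sum_{k\in\mathcal{A}}\mu_k$ and $\mathcal{I}(\mathcal{A})=\bigcup_{k\in\mathcal{A}}\mathcal{I}_k$. Model: time is slotted; in each slot exactly one customer and one server arrive, the customer being of class $i$ with probability $\lambda_i$ and the server of class $k$ with probability $\mu_k$, independently within and across slots. Unmatched customers and unmatched servers wait in two queues in arrival order. Upon each arrival (first-come-first-matched policy): (1) the incoming customer is matched with the longest-waiting compatible unmatched server, if any; (2) the incoming server is matched with the longest-waiting compatible unmatched customer, if any; (3) if neither can be matched with a waiting item, they are matched with each other if compatible; (4) any incoming item still unmatched is appended to the back of its queue. Matched items leave immediately. The state is $(c,d)$ with $c=(c_1,\dots,c_n)$ the classes of unmatched customers and $d=(d_1,\dots,d_n)$ the classes of unmatched servers, in arrival order (the two lengths are always equal); the state space is $\Pi=\bigcup_{n\ge0}\{(c,d)\in\mathcal{I}^n\times\mathcal{K}^n: c_p\nsim d_q\ \forall p,q\}$, and $\varnothing$ denotes the empty state. Stability condition (assumed): $\lambda(\mathcal{A})<\mu(\mathcal{K}(\mathcal{A}))$ for every non-empty $\mathcal{A}\subsetneq\mathcal{I}$ (equivalently $\mu(\mathcal{A})<\lambda(\mathcal{I}(\mathcal{A}))$ for every non-empty $\mathcal{A}\subsetneq\mathcal{K}$). Then the Markov chain of states is ergodic with stationary distribution $\pi(c,d)=\pi(\varnothing)\prod_{p=1}^n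 \frac{\lambda_{c_p}}{\mu(\mathcal{K}(\{c_1,\dots,c_p\}))}\frac{\mu_{d_p}}{\lambda(\mathcal{I}(\{d_1,\dots,d_p\}))}$, $(c,d)\in\Pi$. Let $\mathcal{J}$ be the family of independent sets $\mathcal{A}\subseteq\mathcal{I}\cup\mathcal{K}$ of the compatibility graph such that $\mathcal{A}\cap\mathcal{I}$ and $\mathcal{A}\cap\mathcal{K}$ are both non-empty, and $\mathcal{J}_0=\mathcal{J}\cup\{\emptyset\}$. For $\mathcal{A}\in\mathcal{J}_0$, let $\Pi_{\mathcal{A}}$ be the set of $(c,d)\in\Pi$ with $\{c_1,\dots,c_n\}=\mathcal{A}\cap\mathcal{I}$ and $\{d_1,\dots,d_n\}=\mathcal{A}\cap\mathcal{K}$, and $\pi(\mathcal{A})=\sum_{(c,d)\in\Pi_{\mathcal{A}}}\pi(c,d)$ (for $\mathcal{A}=\emptyset$ this is $\pi(\varnothing)$). *)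

(* Defs.v *)
From HB Require Import structures.
From mathcomp Require Import all_boot all_order all_algebra.
From mathcomp Require Import all_classical all_reals all_analysis.
Set Implicit Arguments. Unset Strict Implicit. Unset Printing Implicit Defensive.
Import Order.TTheory GRing.Theory Num.Theory.
Local Open Scope ring_scope.

Section Matching.
Variables (R : realType) (I K : finType) (adj : I -> K -> bool)
  (lam : I -> R) (mu : K -> R).

Definition lamS (A : {set I}) : R := \sum_(i in A) lam i.
Definition muS (A : {set K}) : R := \sum_(k in A) mu k.

Definition Kset (A : {set I}) : {set K} := [set k | [exists i in A, adj i k]].
Definition Iset (A : {set K}) : {set I} := [set i | [exists k in A, adj i k]].

Definition bip_edge : rel (I + K) := fun x y =>
  match x, y with
  | inl i, inr k => adj i k
  | inr k, inl i => adj i k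
  | _, _ => false
  end.
Definition graph_connected : Prop := forall x y : I + K, connect bip_edge x y.

Definition stable : Prop :=
  forall A : {set I}, A != finset.set0 -> A != [set: I] -> lamS A < muS (Kset A).

(* states of length n: c : n-tuple of customer classes, d : n-tuple of
   server classes, with c_p and d_q incompatible for all p, q *)
Definition state_ok n (c : n.-tuple I) (d : n.-tuple K) : bool :=
  [forall p : 'I_n, forall q : 'I_n, ~~ adj (tnth c p) (tnth d q)].

(* prefix sets {c_1,...,c_p} (p 1-based, here q <= p for 0-based p) *)
Definition prefI n (c : n.-tuple I) (p : 'I_n) : {set I} :=
  [set tnth c q | q : 'I_n & (q <= p)%N].
Definition prefK n (d : n.-tuple K) (p : 'I_n) : {set K} :=
  [set tnth d q | q : 'I_n & (q <= p)%N].

Definition weight n (c : n.-tuple I) (d : n.-tuple K) : R :=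
  \prod_(p < n) ((lam (tnth c p) / muS (Kset (prefI c p))) *
                 (mu (tnth d p) / lamS (Iset (prefK d p)))).

Definition norm_const : \bar R :=
  (\sum_(n <oo) (\sum_(c : n.-tuple I) \sum_(d : n.-tuple K | state_ok c d)
      weight c d)%:E)%E.

Definition pi0 : R := (fine norm_const)^-1.

Definition pi n (c : n.-tuple I) (d : n.-tuple K) : R := pi0 * weight c d.

(* a subset A of I ∪ K is represented by the pair (A ∩ I, A ∩ K) *)
Definition inJ (A : {set I} * {set K}) : bool :=
  [&& A.1 != finset.set0, A.2 != finset.set0 &
      [forall i in A.1, forall k in A.2, ~~ adj i k]].
Definition inJ0 (A : {set I} * {set K}) : bool :=
  inJ A || (A == (finset.set0, finset.set0)).

Definition piA (A : {set I} * {set K}) : \bar R :=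
  (\sum_(n <oo) (\sum_(c : n.-tuple I) \sum_(d : n.-tuple K |
      [&& state_ok c d, [set x in c] == A.1 & [set y in d] == A.2])
      pi c d)%:E)%E.

End Matching.

(* Main.v *)
Require Import Defs.
From HB Require Import structures.
From mathcomp Require Import all_boot all_order all_algebra.
From mathcomp Require Import all_classical all_reals all_analysis.
From mathcomp Require Import ring lra.
Set Implicit Arguments. Unset Strict Implicit. Unset Printing Implicit Defensive.
Import Order.TTheory GRing.Theory Num.Theory.
Local Open Scope ring_scope.

Lemma pref_take (T : finType) n (c : n.-tuple T) (p : 'I_n) :
  [set tnth c q | q : 'I_n & (q <= p)%N] = [set x in take p.+1 c].
Proof.
apply/setP => x; rewrite inE; apply/imsetP/idP.
- move=> [q]; rewrite inE => qp ->.
  have x0 := tnth c q.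
  rewrite (tnth_nth x0) -(@nth_take p.+1) //.
  apply: mem_nth; rewrite size_takel ?size_tuple //.
- move=> xt; have x0 := x.
  have hs : size (take p.+1 c) = p.+1 by rewrite size_takel ?size_tuple.
  have hi : (index x (take p.+1 c) < p.+1)%N by rewrite -[X in (_ < X)%N]hs index_mem.
  have hj : (index x (take p.+1 c) < n)%N by rewrite (leq_trans hi) // ltn_ord.
  exists (Ordinal hj); first by rewrite inE /= -ltnS.
  by rewrite (tnth_nth x0) /= -(@nth_take p.+1) ?nth_index.
Qed.

Lemma tnth_rcons_widen (T : Type) n (c : n.-tuple T) x (p : 'I_n) :
  tnth (rcons_tuple c x) (widen_ord (leqnSn n) p) = tnth c p.
Proof. by rewrite (tnth_nth x) (tnth_nth x) /= nth_rcons size_tuple ltn_ord. Qed.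

Lemma tnth_rcons_max (T : Type) n (c : n.-tuple T) x :
  tnth (rcons_tuple c x) ord_max = x.
Proof. by rewrite (tnth_nth x) /= nth_rcons size_tuple ltnn eqxx. Qed.

Lemma pref_rcons_widen (T : finType) n (c : n.-tuple T) x (p : 'I_n) :
  [set tnth (rcons_tuple c x) q | q : 'I_n.+1 & (q <= widen_ord (leqnSn n) p)%N]
  = [set tnth c q | q : 'I_n & (q <= p)%N].
Proof.
rewrite !pref_take /= -cats1 takel_cat // size_tuple; exact: ltn_ord.
Qed.

Lemma pref_rcons_max (T : finType) n (c : n.-tuple T) x :
  [set tnth (rcons_tuple c x) q | q : 'I_n.+1 & (q <= (@ord_max n))%N]
  = [set y in rcons c x].
Proof.
by rewrite pref_take /= take_oversize // size_rcons size_tuple.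
Qed.

Lemma sum_tupleS (R : nmodType) (T : finType) n (F : n.+1.-tuple T -> R) :
  \sum_(c : n.+1.-tuple T) F c = \sum_(c : n.-tuple T) \sum_(x : T) F (rcons_tuple c x).
Proof.
rewrite pair_big /=.
have hinj : injective (fun p : n.-tuple T * T => rcons_tuple p.1 p.2).
  move=> [c x] [c' x'] /= /(congr1 val) /= h.
  have ex : x = x' by move: (congr1 (last x) h); rewrite !last_rcons.
  subst x'; congr (_, _); apply: val_inj; exact: rcons_injl h.
have hb := inj_card_bij hinj.
rewrite (reindex _ (onW_bij _ (hb _))) //.
by rewrite card_prod !card_tuple expnS mulnC.
Qed.

Lemma swap3 (R : realType) (X Y Z : finType) (P : pred X) (ok : Y -> Z -> bool)
  (C : X -> Y -> Z -> bool) (w : X -> R) (F : Y -> Z -> R) :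
  \sum_(x | P x) w x * \sum_y \sum_(z | ok y z && C x y z) F y z =
  \sum_y \sum_(z | ok y z) F y z * \sum_(x | P x && C x y z) w x.
Proof.
under eq_bigr do rewrite big_distrr /=.
rewrite exchange_big /=; apply: eq_bigr => y _.
under eq_bigr do rewrite big_distrr /= big_mkcond /=.
rewrite exchange_big /= [RHS]big_mkcond /=; apply: eq_bigr => z _.
case: (ok y z) => /=; last by rewrite big1 // => x _; rewrite mulr0.
rewrite big_distrr /= [LHS]big_mkcond [RHS]big_mkcond /=; apply: eq_bigr => x _.
by case: (P x); case: (C x y z) => /=; rewrite ?mulr0 ?mul0r // mulrC.
Qed.

Section Main.
Variables (R : realType) (I K : finType) (adj : I -> K -> bool)
  (lam : I -> R) (mu : K -> R).

Lemma state_okE n (c : n.-tuple I) (d : n.-tuple K) :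
  state_ok adj c d = all (fun x => all (fun y => ~~ adj x y) d) c.
Proof.
apply/forallP/allP.
- move=> H x /tnthP [p ->]; apply/allP => y /tnthP [q ->].
  exact: (forallP (H p) q).
- move=> H p; apply/forallP => q.
  exact: (allP (H _ (mem_tnth p c)) _ (mem_tnth q d)).
Qed.

Lemma in_Iset (i : I) (d : seq K) : (i \in Iset adj [set y in d]) = has (adj i) d.
Proof.
rewrite inE; apply/existsP/hasP.
- by move=> [k /andP [kd h]]; exists k; rewrite // inE in kd.
- by move=> [k kd h]; exists k; rewrite inE kd.
Qed.

Lemma in_Kset (k : K) (c : seq I) : (k \in Kset adj [set x in c]) = has (adj^~ k) c.
Proof.
rewrite inE; apply/existsP/hasP.
- by move=> [i /andP [ic h]]; exists i; rewrite // inE in ic.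
- by move=> [i ic h]; exists i; rewrite inE ic.
Qed.

Lemma ok_rcons n (c : n.-tuple I) (d : n.-tuple K) i k :
  state_ok adj (rcons_tuple c i) (rcons_tuple d k) =
  [&& state_ok adj c d, ~~ adj i k, i \notin Iset adj [set y in d]
    & k \notin Kset adj [set x in c]].
Proof.
rewrite !state_okE in_Iset in_Kset /= -!all_predC.
under eq_all do rewrite all_rcons.
rewrite all_predI.
have e1 : forall (T : eqType) (P : pred T) (s : seq T) x, all P (rcons s x) = P x && all P s.
  by move=> T P s x; rewrite all_rcons.
rewrite !e1 /=.
by case: (adj i k); case: (all _ c); case: (all _ d); case: (all _ c).
Qed.

Lemma weight_rcons n (c : n.-tuple I) (d : n.-tuple K) i k :
  weight adj lam mu (rcons_tuple c i) (rcons_tuple d k) =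
  weight adj lam mu c d * ((lam i / muS mu (Kset adj [set x in rcons c i])) *
                           (mu k / lamS lam (Iset adj [set y in rcons d k]))).
Proof.
rewrite /weight big_ord_recr /=; congr (_ * _).
  apply: eq_bigr => p _.
  by rewrite /prefI /prefK !tnth_rcons_widen !pref_rcons_widen.
by rewrite /prefI /prefK !tnth_rcons_max !pref_rcons_max.
Qed.

Lemma muS_ge0 (mu_pos : forall k, 0 < mu k) A : 0 <= muS mu A.
Proof. by apply: sumr_ge0 => k _; exact: ltW. Qed.
Lemma lamS_ge0 (lam_pos : forall i, 0 < lam i) A : 0 <= lamS lam A.
Proof. by apply: sumr_ge0 => k _; exact: ltW. Qed.

Lemma muS_gt0 (mu_pos : forall k, 0 < mu k) (A : {set K}) k : k \in A -> 0 < muS mu A.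
Proof.
move=> kA; rewrite /muS (bigD1 k) //=.
have : 0 <= \sum_(j in A | j != k) mu j by apply: sumr_ge0 => j _; exact: ltW.
by have := mu_pos k; lra.
Qed.

Lemma lamS_gt0 (lam_pos : forall i, 0 < lam i) (A : {set I}) i : i \in A -> 0 < lamS lam A.
Proof.
move=> iA; rewrite /lamS (bigD1 i) //=.
have : 0 <= \sum_(j in A | j != i) lam j by apply: sumr_ge0 => j _; exact: ltW.
by have := lam_pos i; lra.
Qed.

Lemma weight_ge0 (lam_pos : forall i, 0 < lam i) (mu_pos : forall k, 0 < mu k)
  n (c : n.-tuple I) (d : n.-tuple K) : 0 <= weight adj lam mu c d.
Proof.
apply: prodr_ge0 => p _; apply: mulr_ge0; apply: divr_ge0;
  by [exact: ltW | exact: muS_ge0 | exact: lamS_ge0].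
Qed.

Lemma pi0_ge0 (lam_pos : forall i, 0 < lam i) (mu_pos : forall k, 0 < mu k) :
  0 <= pi0 adj lam mu.
Proof.
rewrite /pi0 invr_ge0; apply: fine_ge0; apply: nneseries_ge0 => m _ _.
rewrite lee_fin; apply: sumr_ge0 => c _; apply: sumr_ge0 => d _.
exact: weight_ge0.
Qed.

Lemma pi_ge0 (lam_pos : forall i, 0 < lam i) (mu_pos : forall k, 0 < mu k)
  n (c : n.-tuple I) (d : n.-tuple K) : 0 <= Defs.pi adj lam mu c d.
Proof. by apply: mulr_ge0; [exact: pi0_ge0 | exact: weight_ge0]. Qed.

Definition fA (A : {set I} * {set K}) n : R :=
  \sum_(c : n.-tuple I) \sum_(d : n.-tuple K |
      [&& state_ok adj c d, [set x in c] == A.1 & [set y in d] == A.2])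
      Defs.pi adj lam mu c d.

Lemma sum_fA (Q : pred ({set I} * {set K})) n :
  \sum_(A | Q A) fA A n = \sum_(c : n.-tuple I) \sum_(d : n.-tuple K |
      state_ok adj c d && Q ([set x in c], [set y in d])) Defs.pi adj lam mu c d.
Proof.
rewrite /fA exchange_big /=; apply: eq_bigr => c _.
rewrite [RHS]big_mkcond; under eq_bigr do rewrite big_mkcond.
rewrite exchange_big; apply: eq_bigr => d _ /=.
case ok: (state_ok adj c d) => /=; last by rewrite big1.
case hQ: (Q _).
  rewrite (bigD1 ([set x in c], [set y in d])) //= !eqxx big1 ?addr0 //.
  move=> [A1 A2] /andP [_ hA]; case: ifP => // /andP [/eqP h1 /eqP h2].
  by move: hA; rewrite /= h1 h2 eqxx.
apply: big1 => [[A1 A2]] QA; case: ifP => // /andP [/eqP h1 /eqP h2].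
by move: hQ; rewrite /= h1 h2 QA.
Qed.

Lemma condL n (c : n.-tuple I) (d : n.-tuple K) i k : state_ok adj c d ->
  [&& inJ adj ([set x in c], [set y in d]), i \in Iset adj [set y in d]
    & k \in Kset adj [set x in c]] =
  (i \in Iset adj [set y in d]) && (k \in Kset adj [set x in c]).
Proof.
move=> ok; case hi: (i \in _); case hk: (k \in _); rewrite ?andbF //=.
have ne1 : [set x in c] != finset.set0.
  by move: hk; rewrite in_Kset => /hasP [x xc _]; apply/set0Pn; exists x; rewrite inE.
have ne2 : [set y in d] != finset.set0.
  by move: hi; rewrite in_Iset => /hasP [y yd _]; apply/set0Pn; exists y; rewrite inE.
rewrite /inJ /= ne1 ne2 /= ?andbT.
apply/forall_inP => x; rewrite inE => xc; apply/forall_inP => y; rewrite inE => yd.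
by move: ok; rewrite state_okE => /allP /(_ x xc) /allP /(_ y yd).
Qed.

Lemma inJ0_ok n (c : n.-tuple I) (d : n.-tuple K) : state_ok adj c d ->
  inJ0 adj ([set x in c], [set y in d]).
Proof.
case: n c d => [|n] c d ok.
  rewrite /inJ0 (tuple0 c) (tuple0 d); apply/orP; right.
  by apply/eqP; congr (_, _); apply/setP => x; rewrite !inE.
rewrite /inJ0 /inJ /=; apply/orP; left.
apply/and3P; split.
- by apply/set0Pn; exists (tnth c ord0); rewrite inE mem_tnth.
- by apply/set0Pn; exists (tnth d ord0); rewrite inE mem_tnth.
apply/forall_inP => x; rewrite inE => xc; apply/forall_inP => y; rewrite inE => yd.
by move: ok; rewrite state_okE => /allP /(_ x xc) /allP /(_ y yd).
Qed.

Lemma prod_sum (A : {set I}) (B : {set K}) :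
  lamS lam A * muS mu B = \sum_(ik : I * K | (ik.1 \in A) && (ik.2 \in B)) lam ik.1 * mu ik.2.
Proof.
rewrite /lamS /muS big_distrl /=.
under eq_bigr do rewrite big_distrr /=.
by rewrite pair_big_dep.
Qed.

Definition GL n := \sum_(ik : I * K) (lam ik.1 * mu ik.2) *
  \sum_(A | [&& inJ adj A, ik.1 \in Iset adj A.2 & ik.2 \in Kset adj A.1]) fA A n.
Definition GR n := \sum_(ik : I * K | ~~ adj ik.1 ik.2) (lam ik.1 * mu ik.2) *
  \sum_(A | [&& inJ0 adj A, ik.1 \notin Iset adj A.2 & ik.2 \notin Kset adj A.1]) fA A n.

Lemma GLE n : GL n = \sum_(c : n.-tuple I) \sum_(d : n.-tuple K | state_ok adj c d)
  Defs.pi adj lam mu c d * (lamS lam (Iset adj [set y in d]) * muS mu (Kset adj [set x in c])).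
Proof.
rewrite /GL.
under eq_bigr => ik _ do rewrite (sum_fA (fun A => [&& inJ adj A, ik.1 \in Iset adj A.2 & ik.2 \in Kset adj A.1])).
rewrite swap3; apply: eq_bigr => c _; apply: eq_bigr => d ok; congr (_ * _).
rewrite prod_sum; apply: eq_bigl => ik /=; exact: condL.
Qed.

Lemma GRE n : GR n = \sum_(c : n.-tuple I) \sum_(d : n.-tuple K | state_ok adj c d)
  Defs.pi adj lam mu c d * \sum_(ik : I * K | [&& ~~ adj ik.1 ik.2,
     ik.1 \notin Iset adj [set y in d] & ik.2 \notin Kset adj [set x in c]])
     lam ik.1 * mu ik.2.
Proof.
rewrite /GR.
under eq_bigr => ik _ do rewrite (sum_fA (fun A => [&& inJ0 adj A, ik.1 \notin Iset adj A.2 & ik.2 \notin Kset adj A.1])).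
rewrite swap3; apply: eq_bigr => c _; apply: eq_bigr => d ok; congr (_ * _).
by apply: eq_bigl => ik /=; rewrite inJ0_ok.
Qed.

Lemma GL_S (lam_pos : forall i, 0 < lam i) (mu_pos : forall k, 0 < mu k)
  (nbrI : forall i, exists k, adj i k) (nbrK : forall k, exists i, adj i k) n :
  GL n.+1 = GR n.
Proof.
rewrite GLE GRE sum_tupleS; apply: eq_bigr => c _.
transitivity (\sum_(d : n.-tuple K) \sum_(ik : I * K)
  (if [&& state_ok adj c d, ~~ adj ik.1 ik.2, ik.1 \notin Iset adj [set y in d]
        & ik.2 \notin Kset adj [set x in c]]
   then Defs.pi adj lam mu c d * (lam ik.1 * mu ik.2) else 0)).
  transitivity (\sum_(i : I) \sum_(d : n.-tuple K) \sum_(k : K)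
  (if [&& state_ok adj c d, ~~ adj i k, i \notin Iset adj [set y in d]
        & k \notin Kset adj [set x in c]]
   then Defs.pi adj lam mu c d * (lam i * mu k) else 0)); last first.
    by rewrite exchange_big /=; apply: eq_bigr => d _; rewrite pair_big.
  apply: eq_bigr => i _; rewrite big_mkcond sum_tupleS; apply: eq_bigr => d _.
  apply: eq_bigr => k _; rewrite ok_rcons.
  case: ifP => // /and4P [ok na ni nk].
  rewrite /Defs.pi weight_rcons.
  have [k0 hk0] := nbrI i.
  have [i0 hi0] := nbrK k.
  have hM : 0 < muS mu (Kset adj [set x in rcons c i]).
    apply: (muS_gt0 mu_pos (k := k0)); rewrite in_Kset; apply/hasP.
    by exists i; rewrite // mem_rcons mem_head.
  have hL : 0 < lamS lam (Iset adj [set y in rcons d k]).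
    apply: (lamS_gt0 lam_pos (i := i0)); rewrite in_Iset; apply/hasP.
    by exists k; rewrite // mem_rcons mem_head.
  rewrite /=; field.
  by apply/andP; split; apply: lt0r_neq0.
rewrite [RHS]big_mkcond; apply: eq_bigr => d _.
case ok: (state_ok adj c d) => /=; last by rewrite big1.
by rewrite big_distrr /= [RHS]big_mkcond.
Qed.

Lemma GL0 : GL 0 = 0.
Proof.
rewrite GLE big1 // => c _; rewrite big1 // => d _.
rewrite (tuple0 c) /muS big_pred0 ?mulr0 // => k.
by rewrite in_Kset.
Qed.

Lemma fA_ge0 (lam_pos : forall i, 0 < lam i) (mu_pos : forall k, 0 < mu k) A n :
  0 <= fA A n.
Proof.
by apply: sumr_ge0 => c _; apply: sumr_ge0 => d _; exact: pi_ge0.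
Qed.

Lemma sum_piA (lam_pos : forall i, 0 < lam i) (mu_pos : forall k, 0 < mu k)
  (Q : pred ({set I} * {set K})) :
  (\sum_(A | Q A) piA adj lam mu A = \sum_(n <oo) (\sum_(A | Q A) fA A n)%:E)%E.
Proof.
rewrite /piA -nneseries_sum; last by move=> A m _; rewrite lee_fin fA_ge0.
apply: eq_eseriesr => m _; rewrite sumEFin /fA; congr (_%:E); apply: eq_bigr => A _; apply: eq_bigr => c _; apply: eq_big => // d.
Qed.

Lemma series_w (lam_pos : forall i, 0 < lam i) (mu_pos : forall k, 0 < mu k)
  (P : pred (I * K)) (Q : I * K -> pred ({set I} * {set K})) :
  (\sum_(ik | P ik) (lam ik.1 * mu ik.2)%:E * \sum_(A | Q ik A) piA adj lam mu A
   = \sum_(n <oo) (\sum_(ik | P ik) (lam ik.1 * mu ik.2) * \sum_(A | Q ik A) fA A n)%:E)%E.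
Proof.
under eq_bigr => ik _ do rewrite (sum_piA lam_pos mu_pos).
have h0 : forall ik n, (0 <= (\sum_(A | Q ik A) fA A n)%:E)%E.
  by move=> ik n; rewrite lee_fin; apply: sumr_ge0 => A _; exact: fA_ge0.
under eq_bigr => ik _ do rewrite -(nneseriesZl _ _ (fun n _ => h0 ik n)).
rewrite -nneseries_sum; last first.
  move=> ik m _; rewrite -EFinM lee_fin; apply: mulr_ge0.
    by apply: mulr_ge0; exact: ltW.
  by apply: sumr_ge0 => A _; exact: fA_ge0.
apply: eq_eseriesr => m _; rewrite -sumEFin; apply: eq_bigr => ik _.
by rewrite EFinM.
Qed.

End Main.

Theorem corollary1 (R : realType) (I K : finType) (adj : I -> K -> bool)
    (lam : I -> R) (mu : K -> R)
    (lam_pos : forall i, 0 < lam i) (mu_pos : forall k, 0 < mu k)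
    (lam_sum : \sum_(i : I) lam i = 1) (mu_sum : \sum_(k : K) mu k = 1)
    (conn : graph_connected adj)
    (stab : stable adj lam mu) :
  (\sum_(ik : I * K)
      (lam ik.1 * mu ik.2)%:E *
      \sum_(A : {set I} * {set K} |
              [&& inJ adj A, ik.1 \in Iset adj A.2 & ik.2 \in Kset adj A.1])
        piA adj lam mu A
   =
   \sum_(ik : I * K | ~~ adj ik.1 ik.2)
      (lam ik.1 * mu ik.2)%:E *
      \sum_(A : {set I} * {set K} |
              [&& inJ0 adj A, ik.1 \notin Iset adj A.2 & ik.2 \notin Kset adj A.1])
        piA adj lam mu A)%E.
Proof.
have [k0 _] : exists k0 : K, true.
  case: (pickP (fun _ : K => true)) => [k0 _| h]; first by exists k0.
  by move: mu_sum; rewrite big_pred0 // => /eqP; rewrite eq_sym oner_eq0.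
have [i0 _] : exists i0 : I, true.
  case: (pickP (fun _ : I => true)) => [i0 _| h]; first by exists i0.
  by move: lam_sum; rewrite big_pred0 // => /eqP; rewrite eq_sym oner_eq0.
have nbrI : forall i, exists k, adj i k.
  move=> i; move: (conn (inl i) (inr k0)) => /connectP [p pth lst].
  case: p pth lst => [|y p] /=; first by [].
  by case: y => // k /andP [h _] _; exists k.
have nbrK : forall k, exists i, adj i k.
  move=> k; move: (conn (inr k) (inl i0)) => /connectP [p pth lst].
  case: p pth lst => [|y p] /=; first by [].
  by case: y => // i /andP [h _] _; exists i.
rewrite (series_w adj lam_pos mu_pos) (series_w adj lam_pos mu_pos).
have gl0 : forall n, (0 <= (GL adj lam mu n)%:E)%E.
  move=> n; rewrite lee_fin; apply: sumr_ge0 => ik _; apply: mulr_ge0.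
    by apply: mulr_ge0; exact: ltW.
  by apply: sumr_ge0 => A _; exact: fA_ge0.
transitivity (\sum_(n <oo) (GL adj lam mu n.+1)%:E)%E.
  transitivity (\sum_(n <oo) (GL adj lam mu n)%:E)%E; first by [].
  rewrite (@nneseries_split _ _ 0 1) // add0n big_nat1 GL0 add0e -nneseries_addn //.
  by apply: eq_eseriesr => n _; rewrite addn1.
by apply: eq_eseriesr => n _; rewrite GL_S.
Qed.
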